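(* If an unrestricted tree-to-tree Hennie machine $\mathcal{H}$ is narrow-visit on all inputs, then it is a tree-to-tree Hennie machine and $[\![\mathcal{H}]\!]$ has linear height increase: there are constants $c,d$ such that $\mathrm{height}([\![\mathcal{H}]\!](t))\le c\,\mathrm{height}(t)+d$ for every $t$ in its domain.
   Context: Trees: ranked alphabets are finite sets with a rank function to $\mathbb{N}$; $T_\Sigma$ is the set of finite ordered $\Sigma$-labeled trees where a node labeled $\sigma$ has $\mathrm{rank}(\sigma)$ children (nodes are words over positive integers, root $\varepsilon$, $i$-th child of $u$ is $ui$); $T_\Sigma[Y]$ allows extra rank-$0$ leaves labeled in $Y$. $\mathrm{height}(t)$ is the maximal number of edges on a root-to-leaf path. The ancestor order on nodes is the prefix order; an antichain is a set of pairwise incomparable nodes. Hennie machines: a uTHM is $(Q,M,\top,\Sigma,\Gamma,q_{init},\delta)$ with finite states $Q$, finite memory symbols $M\ni\top$, $q_{init}\in Q$, partial $\delta:Q\times\Sigma\times M\rightharpoonup T_\Gamma[Q\times M\times D]$, $D=\{\uparrow,1,..,\max\mathrm{rank}\Sigma\}$, leaves $(q',m',d)$ of $\delta(q,\sigma,m)$ having $d\in\{\uparrow,1,..,\mathrm{rank}\sigma\}$. Configurations on $t$ are $(u,q,\mu)$, $\mu:$ nodes$\to M$, initially $(\varepsilon,q_{init},\text{constant }\top)$; the step of $(u,q,\mu)$ is $\delta(q,\mathrm{lab}_t(u),\mu(u))$ with each leaf $(q',m',d)$ replaced by $(ud,q',\mu[u\mapsto m'])$ ($ud$ the parent if $d=\uparrow$,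 else the $d$-th child; undefined if nonexistent). Confluent rewriting of configuration leaves by steps from the initial configuration yields the output $[\![\mathcal{H}]\!](t)\in T_\Gamma$, if any. A branch-outputting run is $C_0,..,C_n$ with $C_0$ initial and $C_{i+1}$ a leaf label of the step of $C_i$; its number of visits at a node set $S$ is $|\{i:\text{position of }C_i\in S\}|$. A THM is a uTHM for which some $N$ bounds visits at every single node, for all inputs and runs. A uTHM is narrow-visit on all inputs if some $N$ bounds the visits at every antichain $S$ of $t$, for all inputs $t$ and all runs on $t$. *)

(* Defs.v *)
From Stdlib Require Import List.
From mathcomp Require Import all_boot.
Set Implicit Arguments. Unset Strict Implicit. Unset Printing Implicit Defensive.

Inductive tree (A : Type) := Node of A & seq (tree A).
Arguments Node {A} _ _.

Fixpoint tmap (A B : Type) (f : A -> B) (t : tree A) : tree B :=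
  let: Node a ts := t in Node (f a) (map (tmap f) ts).

Fixpoint height (A : Type) (t : tree A) : nat :=
  let: Node _ ts := t in foldr maxn 0 (map (fun c => (height c).+1) ts).

Fixpoint wf_tree (A : Type) (rk : A -> nat) (t : tree A) : bool :=
  let: Node a ts := t in (size ts == rk a) && all (wf_tree rk) ts.

Fixpoint leaf_labels (A : Type) (t : tree A) : seq A :=
  let: Node a ts := t in
  if ts is [::] then [:: a] else flatten (map (@leaf_labels A) ts).

Fixpoint topt (A : Type) (t : tree (option A)) : option (tree A) :=
  let: Node oa ts := t in
  match oa with
  | None => None
  | Some a => let ots := map (@topt A) ts in
              if all (fun o : option (tree A) => o : bool) ots then Some (Node a (pmap id ots)) else None
  end.

(* Nodes are words over positive integers; root = [::], i-th child of u = rcons u i. *)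
Fixpoint subtree (A : Type) (t : tree A) (u : seq nat) : option (tree A) :=
  match u with
  | [::] => Some t
  | i :: u' =>
      let: Node _ ts := t in
      if i is i'.+1 then
        (if drop i' ts is c :: _ then subtree c u' else None)
      else None
  end.

Definition is_node (A : Type) (t : tree A) (u : seq nat) : bool := subtree t u.

Definition lab (A : Type) (t : tree A) (u : seq nat) : option A :=
  omap (fun s => let: Node a _ := s in a) (subtree t u).

Definition antichain (A : Type) (t : tree A) (S : pred (seq nat)) : Prop :=
  (forall u, S u -> is_node t u) /\
  (forall u v, S u -> S v -> prefix u v -> u = v).

(* Directions D: None = "up", Some i = i-th child (1-based). *)
Definition dir := option nat.

Record uTHM (Sig Gam : finType) := MkUTHM {
  Qs : finType;
  Ms : finType;
  top : Ms;
  qinit : Qs;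
  delta : Qs -> Sig -> Ms -> option (tree (Gam + (Qs * Ms * dir)))
}.

Section Semantics.
Variables (Sig Gam : finType) (rkS : Sig -> nat) (rkG : Gam -> nat).
Variable H : uTHM Sig Gam.

Local Notation Q := (Qs H).
Local Notation M := (Ms H).

Fixpoint wf_rhs (k : nat) (r : tree (Gam + (Q * M * dir))) : bool :=
  let: Node x ts := r in
  match x with
  | inl g => (size ts == rkG g) && all (wf_rhs k) ts
  | inr (_, _, d) => (if ts is [::] then true else false) &&
      (if d is Some i then (0 < i <= k) else true)
  end.

Definition uTHM_wf : Prop :=
  forall q s m r, @delta _ _ H q s m = Some r -> wf_rhs (rkS s) r.

Record config := Conf { pos : seq nat; st : Q; mem : seq nat -> M }.

Definition init_config : config := Conf [::] (qinit H) (fun _ => top H).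

Definition upd (mu : seq nat -> M) (u : seq nat) (m : M) : seq nat -> M :=
  fun v => if v == u then m else mu v.

Definition target (t : tree Sig) (u : seq nat) (d : dir) : option (seq nat) :=
  let v := match d with
           | None => if u is [::] then None else Some (take (size u).-1 u)
           | Some i => Some (rcons u i)
           end in
  match v with Some w => if is_node t w then Some w else None | None => None end.

Definition step (t : tree Sig) (C : config) : option (tree (Gam + config)) :=
  match lab t (pos C) with
  | None => None
  | Some s =>
    match @delta _ _ H (st C) s (mem C (pos C)) with
    | None => None
    | Some r0 =>
      topt (tmap (fun x : Gam + (Q * M * dir) =>
        match x with
        | inl g => Some (inl g)
        | inr (q', m', d) =>
            omap (fun v => inr (Conf v q' (upd (mem C) (pos C) m')))
                 (target t (pos C) d)
        end) r0)
    end
  end.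

Inductive rw1 (t : tree Sig) : tree (Gam + config) -> tree (Gam + config) -> Prop :=
| rw_leaf C r : step t C = Some r -> rw1 t (Node (inr C) [::]) r
| rw_ctx a l1 x y l2 : rw1 t x y ->
    rw1 t (Node a (l1 ++ x :: l2)) (Node a (l1 ++ y :: l2)).

Inductive rw_star (t : tree Sig) : tree (Gam + config) -> tree (Gam + config) -> Prop :=
| rws_refl x : rw_star t x x
| rws_step x y z : rw1 t x y -> rw_star t y z -> rw_star t x z.

Definition output (t : tree Sig) (s : tree Gam) : Prop :=
  rw_star t (Node (inr init_config) [::]) (tmap inl s).

Definition run (t : tree Sig) (cs : seq config) : Prop :=
  [/\ cs <> [::], head init_config cs = init_config &
      forall i, i.+1 < size cs ->
        exists r, step t (nth init_config cs i) = Some r /\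
                  In (inr (nth init_config cs i.+1)) (leaf_labels r)].

Definition visits (cs : seq config) (S : pred (seq nat)) : nat :=
  count (fun C => S (pos C)) cs.

Definition is_THM : Prop :=
  exists N, forall t, wf_tree rkS t -> forall cs, run t cs ->
    forall u, visits cs (pred1 u) <= N.

Definition narrow_visit : Prop :=
  exists N, forall t, wf_tree rkS t -> forall cs, run t cs ->
    forall S, antichain t S -> visits cs S <= N.

End Semantics.

(* Main.v *)
Require Import Defs.
From Stdlib Require Import List.
From mathcomp Require Import all_boot.
From mathcomp Require Import zify.
Set Implicit Arguments. Unset Strict Implicit. Unset Printing Implicit Defensive.

Definition tree_ind' (A : Type) (P : tree A -> Prop)
  (HP : forall a ts, (forall c, In c ts -> P c) -> P (Node a ts)) : forall t, P t :=
  fix F t := let: Node a ts := t in HP a ts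
    ((fix G (l : seq (tree A)) : forall c, In c l -> P c :=
      match l with
      | [::] => fun c (h : In c [::]) => False_ind _ h
      | x :: l' => fun c (h : In c (x :: l')) =>
          match h with
          | or_introl e => eq_ind x P (F x) c e
          | or_intror h' => G l' c h'
          end
      end) ts).

Lemma fmax_le (T : Type) (f : T -> nat) l n :
  (forall x, In x l -> f x <= n) -> foldr maxn 0 (map f l) <= n.
Proof.
elim: l => //= x l IH H; rewrite geq_max H /=; last by left.
by apply: IH => y hy; apply: H; right.
Qed.

Lemma fmax_ge (T : Type) (f : T -> nat) l x : In x l -> f x <= foldr maxn 0 (map f l).
Proof.
elim: l => //= y l IH [<-|h]; first exact: leq_maxl.
exact: leq_trans (IH h) (leq_maxr _ _).
Qed.

Lemma In_map' (A B : Type) (f : A -> B) x l : In x l -> In (f x) (map f l).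
Proof. by elim: l => //= y l IH [->|h]; [left|right; apply: IH]. Qed.

Lemma In_cat (A : Type) (x : A) s1 s2 : In x (s1 ++ s2) <-> In x s1 \/ In x s2.
Proof.
elim: s1 => /=; first by split; [right|case].
move=> y s IH; split.
- by case=> [->|/IH [h|h]]; [left;left|left;right|right].
- by case=> [[->|h]|h]; [left|right; apply/IH; left|right; apply/IH; right].
Qed.

Lemma In_flatten (A B : Type) (g : A -> seq B) l y :
  In y (flatten (map g l)) <-> exists c, In c l /\ In y (g c).
Proof.
elim: l => /=; first by split=> // -[c []].
move=> c l IH; rewrite In_cat; split.
- case=> [h|/IH [c' [h1 h2]]]; first by exists c; split=> //; left.
  by exists c'; split=> //; right.
- case=> c' [[->|h1] h2]; first by left.
  by right; apply/IH; exists c'.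
Qed.

Lemma height_tmap (A B : Type) (f : A -> B) x : height (tmap f x) = height x.
Proof.
elim/tree_ind': x => a ts IH /=.
elim: ts IH => //= c ts IHts IH.
rewrite IH; last by left.
by rewrite IHts // => c' h; apply: IH; right.
Qed.

Lemma pmap_topt (B : Type) (l : seq (tree (option B))) c' :
  In c' (pmap id (map (@topt B) l)) -> exists c, In c l /\ topt c = Some c'.
Proof.
elim: l => //= c l IH.
case E: (topt c) => [y|] /=.
- case=> [<-|h]; first by exists c; split=> //; left.
  by case: (IH h) => c0 [h1 h2]; exists c0; split=> //; right.
- by move=> h; case: (IH h) => c0 [h1 h2]; exists c0; split=> //; right.
Qed.

Lemma topt_height (B : Type) (x : tree (option B)) y :
  topt x = Some y -> height y <= height x.
Proof.
elim/tree_ind': x y => oa ts IH y /=.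
case: oa => [a|] //; case: ifP => // _ [<-] /=.
apply: fmax_le => c' hc'.
case: (pmap_topt hc') => c [hc ec].
apply: leq_trans _ (fmax_ge (fun c => (height c).+1) hc).
by rewrite ltnS; apply: IH.
Qed.

Inductive allt (A : Type) (P : A -> Prop) : tree A -> Prop :=
  AllN a ts : P a -> (forall c, In c ts -> allt P c) -> allt P (Node a ts).

Lemma allt_tmap (A B : Type) (f : A -> B) (P : B -> Prop) x :
  (forall a, P (f a)) -> allt P (tmap f x).
Proof.
move=> hf; elim/tree_ind': x => a ts IH /=; constructor => // c.
elim: ts IH => //= c0 ts IHts IH [<-|h]; first by apply: IH; left.
by apply: IHts => // c1 h1; apply: IH; right.
Qed.

Lemma allt_topt (B : Type) (Q : B -> Prop) x y :
  allt (fun o => forall b, o = Some b -> Q b) x -> topt x = Some y -> allt Q y.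
Proof.
elim/tree_ind': x y => oa ts IH y hx; inversion hx; subst.
rewrite /=; case: oa hx H1 => [a|] // hx H1; case: ifP => // _ [<-].
constructor; first exact: H1.
move=> c' hc'; case: (pmap_topt hc') => c [hc ec].
exact: IH hc _ (H2 _ hc) ec.
Qed.

Lemma allt_leaf (A : Type) (Q : A -> Prop) x l :
  allt Q x -> In l (leaf_labels x) -> Q l.
Proof.
elim/tree_ind': x => a ts IH hx; inversion hx; subst => /=.
case: ts IH hx H2 => [|c0 ts] IH hx H2; first by case=> // <-.
move/In_flatten => [c [hc hl]]; exact: IH hc (H2 _ hc) hl.
Qed.

Lemma In_drop (A : Type) n (l : seq A) c r : drop n l = c :: r -> In c l.
Proof.
elim: l n => [|x l IH] [|n] //=; first by case=> -> _; left.
by move/IH; right.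
Qed.

Lemma node_depth (A : Type) (t : tree A) u : is_node t u -> size u <= height t.
Proof.
elim: u t => [|i u IH] [a ts] //=.
rewrite /is_node /=; case: i => // i'.
case E: (drop i' ts) => [|c rest] // h.
have hc := In_drop E.
apply: leq_trans (fmax_ge (fun c => (height c).+1) hc); rewrite ltnS; exact: IH.
Qed.

Section M.
Variables (Sig Gam : finType) (H : uTHM Sig Gam).

Definition Kb : nat := \max_(x : (Qs H * Sig * Ms H)%type)
  (if @delta _ _ H x.1.1 x.1.2 x.2 is Some r then height r else 0).

Definition Qn (t : tree Sig) (b : Gam + config H) : Prop :=
  match b with inr C' => is_node t (pos C') | inl _ => True end.

Lemma target_node (t : tree Sig) u d v : target t u d = Some v -> is_node t v.
Proof.
rewrite /target; case: d => [i|]; last case: u => [|x u] //;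
  by case: ifP => // h [<-].
Qed.

Lemma step_props (t : tree Sig) (C : config H) r : step t C = Some r -> height r <= Kb /\ allt (Qn t) r.
Proof.
rewrite /step; case: (lab t (pos C)) => [s|] //.
case E: (delta _ _ _) => [r0|] // Ht; split.
- apply: leq_trans (topt_height Ht) _; rewrite height_tmap.
  have := leq_bigmax (F := fun x : (Qs H * Sig * Ms H)%type =>
     (if @delta _ _ H x.1.1 x.1.2 x.2 is Some r then height r else 0))
     (st C, s, Defs.mem C (pos C)).
  by rewrite /= E.
- apply: allt_topt Ht; apply: allt_tmap => -[g|[[q' m'] d]] b /=; first by case=> <-.
  case Et: (target t (pos C) d) => [v|] //= [<-] /=.
  exact: target_node Et.
Qed.

Lemma run_nodes (t : tree Sig) cs : run t cs ->
  forall i, i < size cs -> is_node t (pos (nth (init_config H) cs i)).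
Proof.
case=> hne hh hs [|i] hi.
- by case: cs hne hh hi {hs} => //= c cs _ ->.
- have [r [hr hin]] := hs i hi.
  have [_ ha] := step_props hr.
  exact: (allt_leaf ha hin).
Qed.

Lemma count_nodes (t : tree Sig) (a : pred (config H)) cs :
  (forall i, i < size cs -> is_node t (pos (nth (init_config H) cs i))) ->
  count a cs = count (fun C => a C && is_node t (pos C)) cs.
Proof.
elim: cs => //= x cs IH h.
have := h 0 isT; rewrite /= => ->; rewrite andbT IH //.
by move=> i hi; apply: (h i.+1).
Qed.

Lemma count_or (T : Type) (a b : pred T) s :
  count (fun x => a x || b x) s <= count a s + count b s.
Proof. elim: s => //= x s IH; case: (a x); case: (b x) => /=; lia. Qed.

Lemma run_rcons (t : tree Sig) cs C' r : run t cs -> step t (last (init_config H) cs) = Some r ->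
  In (inr C') (leaf_labels r) -> run t (rcons cs C').
Proof.
case=> hne hh hs hst hin; split.
- by case: cs {hne hh hs hst}.
- by case: cs hne hh {hs hst}.
- move=> i; rewrite size_rcons ltnS => hi.
  rewrite !nth_rcons hi; case: (ltnP i.+1 (size cs)) => h; first by apply: hs.
  have e : i.+1 = size cs by apply/eqP; rewrite eqn_leq h hi.
  rewrite e eqxx.
  have -> : i = (size cs).-1 by rewrite -e.
  by rewrite nth_last; exists r; split.
Qed.

End M.

Section I.
Variables (Sig Gam : finType) (H : uTHM Sig Gam) (t : tree Sig).

Definition cond (e : nat) (a : Gam + config H) (leaf : bool) : Prop :=
  exists cs, run t cs /\ e <= Kb H * size cs /\
    (forall C, a = inr C -> leaf -> last (init_config H) cs = C /\ e + Kb H <= Kb H * size cs).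

Inductive Inv : nat -> tree (Gam + config H) -> Prop :=
  InvN e a ts : cond e a (nilp ts) -> (forall c, In c ts -> Inv e.+1 c) -> Inv e (Node a ts).

Lemma inv_node e a ts : Inv e (Node a ts) ->
  cond e a (nilp ts) /\ forall c, In c ts -> Inv e.+1 c.
Proof. by move=> h; inversion h; subst. Qed.

Lemma leaf_inv cs e : run t cs -> e + Kb H <= Kb H * size cs ->
  forall x j, j + height x <= Kb H ->
  (forall C, In (inr C) (leaf_labels x) -> run t (rcons cs C)) -> Inv (e + j) x.
Proof.
move=> Hr He x; elim/tree_ind': x => a ts IH j hj hl; constructor.
- case: ts IH hj hl => [|c0 ts0] IH hj hl.
  + move: hj hl => /= hj hl; case: a hl => [g|C] hl.
    * exists cs; split=> //; split; first lia.
      by [].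
    * exists (rcons cs C); split; first by apply: hl; left.
      rewrite size_rcons mulnS /=; split; first lia.
      move=> C' [<-] _; rewrite last_rcons; split=> //; lia.
  + exists cs; split=> //; split=> //.
    have : j <= Kb H by move: hj; rewrite /=; lia.
    lia.
- move=> c hc; rewrite -addnS; apply: IH => //.
  + apply: leq_trans hj; rewrite addSn -addnS leq_add2l.
    exact: (fmax_ge (fun c => (height c).+1) hc).
  + move=> C hC; apply: hl.
    case: ts hj hc => // c0 ts0 _ hc.
    by apply: (proj2 (In_flatten (@leaf_labels _) (c0 :: ts0) _)); exists c.
Qed.

Lemma rw1_inv x y : rw1 t x y -> forall e, Inv e x -> Inv e y.
Proof.
elim=> [C r hs|a l1 x0 y0 l2 _ IH] e hinv.
- have [[cs [hr [hle hC]]] _] := inv_node hinv.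
  have [hl hK] := hC C erefl isT.
  have [hh ha] := step_props hs.
  have := leaf_inv hr hK (x := r) (j := 0); rewrite addn0; apply; first by [].
  move=> C' hin; apply: run_rcons hr _ hin; rewrite hl; exact: hs.
- have [hc hch] := inv_node hinv; constructor.
  + have -> : nilp (l1 ++ y0 :: l2) = nilp (l1 ++ x0 :: l2) by rewrite /nilp !size_cat.
    exact: hc.
  + move=> c /In_cat [h|[<-|h]].
    * by apply: hch; apply/In_cat; left.
    * by apply: IH; apply: hch; apply/In_cat; right; left.
    * by apply: hch; apply/In_cat; right; right.
Qed.

Lemma rws_inv x y : rw_star t x y -> Inv 0 x -> Inv 0 y.
Proof. by elim=> // x0 y0 z0 h _ IH hx; apply: IH; apply: rw1_inv h _ hx. Qed.

Lemma init_inv : Inv 0 (Node (inr (init_config H)) [::]).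
Proof.
constructor=> //; exists [:: init_config H]; split.
- split=> // -[|i] //.
- rewrite muln1; split=> // C [<-] _; split=> //.
Qed.

Lemma final_inv B (s : tree Gam) e : Inv e (tmap inl s) ->
  (forall cs : seq (config H), run t cs -> size cs <= B) -> e + height s <= Kb H * B.
Proof.
move=> + hB; elim/tree_ind': s e => g ss IH e /= hinv.
have [[cs [hr [hle _]]] hch] := inv_node hinv.
have h1 : e <= Kb H * B by apply: leq_trans hle (leq_mul (leqnn _) (hB _ hr)).
suff : foldr maxn 0 (map (fun c => (height c).+1) ss) <= Kb H * B - e by lia.
apply: fmax_le => c hc.
have := IH c hc e.+1 (hch _ (In_map' _ hc)); lia.
Qed.

End I.

Lemma run_size (Sig Gam : finType) (rkS : Sig -> nat) (H : uTHM Sig Gam) N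
  (HN : forall t, wf_tree rkS t -> forall cs, run (H := H) t cs ->
    forall S, antichain t S -> visits cs S <= N)
  (t : tree Sig) (ht : wf_tree rkS t) (cs : seq (config H)) :
  run t cs -> size cs <= N * (height t).+1.
Proof.
move=> hr; have hn := run_nodes hr.
have e1 : size cs = count predT cs by rewrite count_predT.
have -> : size cs = count (fun C : config H => true && is_node t (pos C)) cs
  by rewrite e1 (count_nodes (t := t)).
apply: leq_trans (_ : count (fun C : config H => size (pos C) < (height t).+1) cs <= _).
  apply: sub_count => C /= h; rewrite ltnS; exact: node_depth.
elim: (height t).+1 => [|n IH]; first by rewrite count_pred0.
apply: leq_trans (_ : count (fun C : config H => (size (pos C) < n) || (size (pos C) == n)) cs <= _).
  by apply: sub_count => C /=; rewrite ltnS leq_eqVlt orbC.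
apply: leq_trans (count_or _ _ _) _; rewrite mulnS addnC leq_add //.
rewrite (count_nodes (t := t)) //.
apply: (HN t ht cs hr (fun u => (size u == n) && is_node t u)).
split; first by move=> u /andP[].
move=> u v /andP[/eqP su _] /andP[/eqP sv _] /prefixP [w ev].
move: sv; rewrite ev size_cat su => hw.
have hw0 : size w = 0 by apply/eqP; rewrite -(eqn_add2l n) addn0 hw.
by move/eqP: hw0; rewrite size_eq0 => /eqP ->; rewrite cats0.
Qed.

Theorem mainTheorem15 (Sig : finType) (rkS : Sig -> nat)
  (Gam : finType) (rkG : Gam -> nat) (H : uTHM Sig Gam) :
  uTHM_wf rkS rkG H ->
  narrow_visit rkS H ->
  is_THM rkS H /\
  exists c d : nat, forall (t : tree Sig) (s : tree Gam),
    wf_tree rkS t -> output H t s -> height s <= c * height t + d.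
Proof.
move=> _ [N HN]; split.
- exists N => t ht cs hr u.
  rewrite /visits (count_nodes (t := t) _ (run_nodes hr)).
  apply: (HN t ht cs hr (fun v => (v == u) && is_node t v)).
  split; first by move=> v /andP[].
  by move=> v w /andP[/eqP -> _] /andP[/eqP -> _].
- exists (Kb H * N), (Kb H * N) => t s ht ho.
  have hi := rws_inv ho (init_inv H t).
  have := final_inv hi (run_size HN ht).
  by rewrite add0n mulnSr mulnDr mulnA.
Qed.
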